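(* Let $F$ be a field and $R$ a Rota–Baxter operator of nonzero weight on $M_n(F)$ such that $R(1)$ is a diagonal matrix whose diagonal entries take exactly $k$ distinct values $\lambda_1,\dots,\lambda_k$, arranged in consecutive blocks: there are $0=s_0<s_1<\dots<s_k=n$ with the $(i,i)$ entry equal to $\lambda_j$ for $s_{j-1}+1\le i\le s_j$. Let $B_j=\mathrm{Span}\{e_{st}\mid s_{j-1}+1\le s,t\le s_j\}$ and $B=B_1\oplus\dots\oplus B_k$. Then $B$ is a subalgebra of $M_n(F)$ with $R(B)\subseteq B$. If $k=n$, then $R$ is diagonal.
   Context: $e_{st}$ denote matrix units. A linear operator $R$ on an algebra $A$ is a Rota–Baxter operator of weight $\lambda$ if $R(x)R(y)=R(R(x)y+xR(y)+\lambda xy)$ for all $x,y$. An RB-operator $R$ on $M_n(F)$ is called diagonal if there is $\psi\in\mathrm{Aut}(M_n(F))$ with $\psi^{-1}R\psi(D_n)\subseteq D_n$, where $D_n$ is the subalgebra of diagonal matrices. *)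

(* Defs.v *)
From HB Require Import structures.
From mathcomp Require Import all_boot all_order all_algebra.
Set Implicit Arguments. Unset Strict Implicit. Unset Printing Implicit Defensive.
Import GRing.Theory.
Local Open Scope ring_scope.

(* Rota-Baxter operator of weight w on M_n(F) (R is assumed linear separately). *)
Definition is_RB (F : fieldType) (n : nat) (R : 'M[F]_n -> 'M[F]_n) (w : F) :=
  forall x y : 'M[F]_n,
    R x *m R y = R (R x *m y + x *m R y + w *: (x *m y)).

(* Membership in B = B_1 (+) ... (+) B_k, where B_j is spanned by the matrix
   units e_st with s_{j-1} <= s,t < s_j (0-based indices).  A matrix lies in
   this span iff all its entries outside the diagonal blocks vanish. *)
Definition inB (F : fieldType) (n : nat) (s : nat -> nat) (k : nat)
    (A : 'M[F]_n) : Prop :=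
  forall i j : 'I_n, A i j != 0 ->
    exists2 b : nat, (1 <= b <= k)%N &
      (s b.-1 <= i < s b)%N /\ (s b.-1 <= j < s b)%N.

Definition is_alg_aut (F : fieldType) (n : nat) (psi : 'M[F]_n -> 'M[F]_n) :=
  [/\ linear psi,
      forall x y : 'M[F]_n, psi (x *m y) = psi x *m psi y,
      psi 1%:M = 1%:M & bijective psi].

Definition RB_diagonal (F : fieldType) (n : nat) (R : 'M[F]_n -> 'M[F]_n) :=
  exists psi psi' : 'M[F]_n -> 'M[F]_n,
    [/\ is_alg_aut psi, cancel psi psi', cancel psi' psi &
        forall D : 'M[F]_n, is_diag_mx D -> is_diag_mx (psi' (R (psi D)))].

(* Main.v *)
Require Import Defs.
From HB Require Import structures.
From mathcomp Require Import all_boot all_order all_algebra.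
From mathcomp Require Import zify.
Import GRing.Theory.
Local Open Scope ring_scope.

Lemma mul_diag_entry (F : fieldType) (n : nat) (A a : 'M[F]_n) (i j : 'I_n) :
  is_diag_mx a -> (A *m a) i j = A i j * a j j /\ (a *m A) i j = a i i * A i j.
Proof.
move/is_diag_mxP=> Ha; rewrite !mxE; split.
- rewrite (bigD1 j) //= big1 ?addr0 // => l Hl.
  by rewrite Ha ?mulr0.
- rewrite (bigD1 i) //= big1 ?addr0 // => l Hl.
  by rewrite Ha ?mul0r // eq_sym.
Qed.

Lemma block_exists (k : nat) (s : nat -> nat) :
  s 0%N = 0%N -> forall m, (m <= k)%N -> forall i, (i < s m)%N ->
  exists2 b : nat, (1 <= b <= m)%N & (s b.-1 <= i < s b)%N.
Proof.
move=> s0; elim=> [|m IH] Hm i Hi; first by rewrite s0 in Hi.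
case: (ltnP i (s m)) => H.
- have [b Hb1 Hb2] := IH (ltnW Hm) i H.
  by exists b => //; case/andP: Hb1 => -> /= Hb; apply: leqW.
- by exists m.+1 => //=; rewrite H Hi.
Qed.

Theorem proposition2 (F : fieldType) (n : nat)
    (R : {linear 'M[F]_n -> 'M[F]_n}) (w : F)
    (k : nat) (s : nat -> nat) (lam : nat -> F) :
  w != 0 ->
  is_RB R w ->
  s 0%N = 0%N -> (forall j, (j < k)%N -> (s j < s j.+1)%N) -> s k = n ->
  (forall j1 j2, (1 <= j1 <= k)%N -> (1 <= j2 <= k)%N ->
      lam j1 = lam j2 -> j1 = j2) ->
  is_diag_mx (R 1%:M) ->
  (forall (j : nat) (i : 'I_n), (1 <= j <= k)%N -> (s j.-1 <= i < s j)%N ->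
      R 1%:M i i = lam j) ->
  ([/\ inB s k (1%:M : 'M[F]_n),
      (forall A B : 'M[F]_n, inB s k A -> inB s k B -> inB s k (A + B)),
      (forall (a : F) (A : 'M[F]_n), inB s k A -> inB s k (a *: A)),
      (forall A B : 'M[F]_n, inB s k A -> inB s k B -> inB s k (A *m B)) &
      (forall A : 'M[F]_n, inB s k A -> inB s k (R A))] /\
   (k = n -> RB_diagonal R)).
Proof.
move=> _ HRB s0 sinc sk linj adiag alam.
set a := R 1%:M.
have blk : forall i : 'I_n, exists2 b : nat, (1 <= b <= k)%N & (s b.-1 <= i < s b)%N.
  by move=> i; apply: (@block_exists k s s0 k (leqnn k)); rewrite sk.
have charB : forall A : 'M[F]_n, inB s k A <-> A *m a = a *m A.
  move=> A; split.
  - move=> HA; apply/matrixP => i j.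
    have [E1 E2] := @mul_diag_entry _ _ A _ i j adiag; rewrite E1 E2.
    have [->|/HA [b Hb [Hi Hj]]] := eqVneq (A i j) 0; first by rewrite mulr0 mul0r.
    by rewrite (alam b i Hb Hi) (alam b j Hb Hj) mulrC.
  - move=> HA i j Hij.
    have := congr1 (fun M : 'M[F]_n => M i j) HA => /=.
    have [E1 E2] := @mul_diag_entry _ _ A _ i j adiag; rewrite E1 E2 => Heq.
    have [bi Hbi Hi] := blk i; have [bj Hbj Hj] := blk j.
    have Haij : a i i = a j j.
      by apply: (mulfI Hij); rewrite mulrC -Heq mulrC.
    rewrite (alam bi i Hbi Hi) (alam bj j Hbj Hj) in Haij.
    have Eb := linj _ _ Hbi Hbj Haij; subst bj.
    by exists bi.
have charR : forall A : 'M[F]_n, A *m a = a *m A -> R A *m a = a *m R A.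
  move=> A HA.
  have H1 := HRB A 1%:M; have H2 := HRB 1%:M A.
  rewrite mulmx1 in H1; rewrite mul1mx in H2.
  rewrite -/a in H1 H2.
  apply/eqP; rewrite -subr_eq0; apply/eqP.
  rewrite H1 H2 -linearB /= HA.
  by rewrite [R A + _]addrC mulmx1 mul1mx subrr linear0.
have RB : forall A : 'M[F]_n, inB s k A -> inB s k (R A).
  by move=> A /charB /charR /charB.
split.
- split.
  + by apply/charB; rewrite mulmx1 mul1mx.
  + by move=> A B /charB HA /charB HB; apply/charB; rewrite mulmxDl mulmxDr HA HB.
  + by move=> c A /charB HA; apply/charB; rewrite -scalemxAl -scalemxAr HA.
  + by move=> A B /charB HA /charB HB; apply/charB; rewrite mulmxA -HA -!mulmxA HB.
  + exact: RB.
- move=> kn; subst k.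
  have sge : forall j, (j <= n)%N -> (j <= s j)%N.
    elim=> [|j IH] Hj //; apply: leq_ltn_trans (IH (ltnW Hj)) (sinc j Hj).
  have sle : forall d, (d <= n)%N -> (s (n - d) <= n - d)%N.
    elim=> [|d IH] Hd; first by rewrite subn0 sk.
    have Hlt : (n - d.+1 < n)%N by rewrite ltn_subrL; apply/andP; split=> //; apply: leq_trans Hd.
    have E : (n - d.+1).+1 = (n - d)%N by rewrite subnS prednK // subn_gt0.
    have := sinc _ Hlt; rewrite E => H.
    by rewrite -ltnS E; apply: leq_trans H (IH (ltnW Hd)).
  have sid : forall j, (j <= n)%N -> s j = j.
    move=> j Hj; apply/eqP; rewrite eqn_leq sge // andbT.
    by have := sle (n - j)%N (leq_subr _ _); rewrite subKn.
  exists (fun x => x), (fun x => x); split => //.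
  + by split => //; exists (fun x => x).
  + move=> D /is_diag_mxP HD; apply/is_diag_mxP => i j Hij.
    have HDB : inB s n D.
      move=> i' j' Hne.
      have [E|/HD E] := eqVneq (i' : nat) j'; last by rewrite E eqxx in Hne.
      by have [b Hb Hib] := blk i'; exists b => //; split => //; rewrite -E.
    apply/eqP; apply: contraT => Hne.
    have [b /andP[Hb1 Hbn] [Hi Hj]] := RB _ HDB i j Hne.
    move: Hi Hj; rewrite !sid //; last by apply: leq_trans (leq_pred b) Hbn.
    move=> Hi Hj; case/negP: Hij; apply/eqP; lia.
Qed.
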